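(* Let $D$ be a linear differential operator of order $k$, ${\bf z}\in\mathbb{R}^d$, ${\bf X}=\{{\bf x}_1,\dots,{\bf x}_N\}$, $\mu\ge0$, $q>k$, and let ${\bf w}={\bf w}^{1,\mu}$ be the weight vector of a $\|\cdot\|_{1,\mu}$-minimal formula of order $q$; assume ${\bf X}_{\bf w}\setminus\{{\bf z}\}\ne\emptyset$. Let $\Omega$ be a domain containing $S_{{\bf z},{\bf X}}$. Then for every $r\in\{k,\dots,q-1\}$, $\gamma\in(0,1]$ and $f\in C^{r,\gamma}(\Omega)$, $$\Big|Df({\bf z})-\sum_{j=1}^Nw_jf({\bf x}_j)\Big|\le\rho_{q,D}({\bf z},{\bf X},1,\mu)\,h_{{\bf z},{\bf X}_{\bf w}}^{\,r+\gamma-\mu}\,|f|_{r,\gamma,\Omega}\quad\text{if }0\le\mu\le r+\gamma,$$ $$\Big|Df({\bf z})-\sum_{j=1}^Nw_jf({\bf x}_j)\Big|\le\rho_{q,D}({\bf z},{\bf X},1,\mu)\,s_{{\bf z},{\bf X}_{\bf w}}^{\,r+\gamma-\mu}\,|f|_{r,\gamma,\Omega}\quad\text{if }\mu>r+\gamma.$$ In particular, for $\mu=r+\gamma$ the error is at most $\rho_{q,D}({\bf z},{\bf X},1,r+\gamma)\,|f|_{r,\gamma,\Omega}$.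
   Context: $\Pi^d_q$: real polynomials in $d$ variables of total degree $<q$. $Df=\sum_{|\alpha|\le k}c_\alpha\partial^\alpha f$, real coefficients, $\sum_{|\alpha|=k}|c_\alpha({\bf z})|\ne0$. ${\bf X}$ consists of distinct points; ${\bf w}$ is exact of order $q$ if $Dp({\bf z})=\sum_jw_jp({\bf x}_j)$ for all $p\in\Pi^d_q$. $\|{\bf w}\|_{1,\mu}:=\sum_j|w_j|\,\|{\bf x}_j-{\bf z}\|_2^\mu$ (convention $\|{\bf x}_j-{\bf z}\|_2^0:=1$); a $\|\cdot\|_{1,\mu}$-minimal formula of order $q$ is an exact-of-order-$q$ formula minimizing $\|{\bf w}\|_{1,\mu}$. $\rho_{q,D}({\bf z},{\bf X},1,\mu):=\inf\{\|{\bf w}\|_{1,\mu}:{\bf w}\text{ exact of order }q\}$ (equivalently $\sup\{Dp({\bf z}):p\in\Pi^d_q,\ |p({\bf x}_j)|\le\|{\bf x}_j-{\bf z}\|_2^\mu\ \forall j\}$). ${\bf X}_{\bf w}:=\{{\bf x}_j\in{\bf X}:w_j\ne0\}$; $h_{{\bf z},{\bf Y}}:=\max_{{\bf y}\in{\bf Y}}\|{\bf y}-{\bf z}\|_2$; $s_{{\bf z},{\bf Y}}:=\min_{{\bf y}\in{\bf Y}\setminus\{{\bf z}\}}\|{\bf y}-{\bf z}\|_2$. $S_{{\bf z},{\bf X}}:=\bigcup_i[{\bf z},{\bf x}_i]$. A domain is an open connected set. $|g|_{\gamma,\Omega}:=\sup_{{\bf x}\ne{\bf y}\in\Omega}|g({\bf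 x})-g({\bf y})|/\|{\bf x}-{\bf y}\|_2^\gamma$; $C^{r,\gamma}(\Omega)$: $r$ times continuously differentiable $f$ with $|\partial^\alpha f|_{\gamma,\Omega}<\infty$ for $|\alpha|=r$; $|f|_{r,\gamma,\Omega}:=\frac{1}{(\gamma+1)\cdots(\gamma+r)}\big(\sum_{|\alpha|=r}\frac{r!}{\alpha!}|\partial^\alpha f|_{\gamma,\Omega}^2\big)^{1/2}$. *)

(* Defs.v *)
From Stdlib Require Import Reals Lra Lia List Arith.
Import ListNotations.
Open Scope R_scope.

(* Points of R^d are functions nat -> R; only coordinates 0..d-1 matter. *)
Definition Pt := nat -> R.

Definition sumN (n : nat) (g : nat -> R) : R :=
  fold_right Rplus 0 (map g (seq 0 n)).

Definition sumL {A : Type} (l : list A) (g : A -> R) : R :=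
  fold_right Rplus 0 (map g l).

Definition edist (d : nat) (x y : Pt) : R :=
  sqrt (sumN d (fun i => (x i - y i) ^ 2)).

Definition pt_eq (d : nat) (x y : Pt) : Prop := forall i, (i < d)%nat -> x i = y i.

(* a^b with the convention 0^0 := 1 (and 0^b = 0 for b <> 0) *)
Definition rpow (a b : R) : R :=
  if Req_EM_T a 0 then (if Req_EM_T b 0 then 1 else 0) else Rpower a b.

(* Multi-indices: lists of length d (canonical representation). *)
Definition MI := list nat.

Fixpoint mi (d n : nat) : list MI :=
  match d with
  | O => match n with O => [nil] | S _ => nil end
  | S d' => flat_map (fun k => map (fun b => k :: b) (mi d' (n - k))) (seq 0 (S n))
  end.

Definition mi_lt (d q : nat) : list MI := flat_map (mi d) (seq 0 q).

Definition mi_abs (a : MI) : nat := list_sum a.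
Definition mi_fact (a : MI) : nat := fold_right Nat.mul 1%nat (map fact a).

Fixpoint incr (a : MI) (i : nat) : MI :=
  match a, i with
  | nil, _ => nil
  | x :: t, O => S x :: t
  | x :: t, S i' => x :: incr t i'
  end.

Definition upd (x : Pt) (i : nat) (t : R) : Pt :=
  fun m => if Nat.eqb m i then t else x m.

Fixpoint monoAux (a : MI) (i : nat) (x : Pt) : R :=
  match a with
  | nil => 1
  | e :: t => x i ^ e * monoAux t (S i) x
  end.
Definition mono (a : MI) (x : Pt) : R := monoAux a 0 x.

Definition poly (d q : nat) (cf : MI -> R) (x : Pt) : R :=
  sumL (mi_lt d q) (fun a => cf a * mono a x).

Definition IsOpen (d : nat) (O : Pt -> Prop) : Prop :=
  forall x, O x -> exists e, 0 < e /\ forall y, edist d y x < e -> O y.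

Definition IsConnected (d : nat) (O : Pt -> Prop) : Prop :=
  forall U V, IsOpen d U -> IsOpen d V ->
    (forall x, O x -> U x \/ V x) -> (forall x, ~ (O x /\ U x /\ V x)) ->
    (forall x, O x -> U x) \/ (forall x, O x -> V x).

Definition IsDomain (d : nat) (O : Pt -> Prop) : Prop := IsOpen d O /\ IsConnected d O.

Definition ContOn (d : nat) (O : Pt -> Prop) (g : Pt -> R) : Prop :=
  forall x, O x -> forall eps, 0 < eps -> exists del, 0 < del /\
    forall y, O y -> edist d y x < del -> Rabs (g y - g x) < eps.

(* F is the family of partial derivatives (F alpha = d^alpha f) of f on O, up to
   order r, all continuous on O: i.e. f is in C^r(O) with these derivatives. *)
Definition DerivFamily (d : nat) (O : Pt -> Prop) (r : nat) (f : Pt -> R)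
    (F : MI -> Pt -> R) : Prop :=
  (forall x, O x -> F (repeat 0%nat d) x = f x) /\
  (forall a, length a = d -> (mi_abs a <= r)%nat -> ContOn d O (F a)) /\
  (forall a i x, length a = d -> (mi_abs a < r)%nat -> (i < d)%nat -> O x ->
     derivable_pt_lim (fun t => F a (upd x i t)) (x i) (F (incr a i) x)).

Definition Dop (d k : nat) (c : MI -> R) (F : MI -> Pt -> R) (z : Pt) : R :=
  sumL (mi_lt d (S k)) (fun a => c a * F a z).

Definition Exact (d N : nat) (X : nat -> Pt) (k : nat) (c : MI -> R) (z : Pt)
    (q : nat) (w : nat -> R) : Prop :=
  forall cf F, DerivFamily d (fun _ => True) k (poly d q cf) F ->
    Dop d k c F z = sumN N (fun j => w j * poly d q cf (X j)).

Definition norm1mu (d N : nat) (X : nat -> Pt) (z : Pt) (mu : R) (w : nat -> R) : R :=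
  sumN N (fun j => Rabs (w j) * rpow (edist d (X j) z) mu).

Definition IsMinimal (d N : nat) (X : nat -> Pt) (k : nat) (c : MI -> R) (z : Pt)
    (q : nat) (mu : R) (w : nat -> R) : Prop :=
  Exact d N X k c z q w /\
  forall w', Exact d N X k c z q w' -> norm1mu d N X z mu w <= norm1mu d N X z mu w'.

Definition IsInf (E : R -> Prop) (m : R) : Prop :=
  (forall x, E x -> m <= x) /\ (forall b, (forall x, E x -> b <= x) -> b <= m).

Definition IsMax (E : R -> Prop) (m : R) : Prop := E m /\ forall x, E x -> x <= m.
Definition IsMin (E : R -> Prop) (m : R) : Prop := E m /\ forall x, E x -> m <= x.

Definition HolderSet (d : nat) (O : Pt -> Prop) (gam : R) (g : Pt -> R) : R -> Prop :=
  fun v => exists x y, O x /\ O y /\ ~ pt_eq d x y /\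
    v = Rabs (g x - g y) / rpow (edist d x y) gam.

(* |f|_{r,gamma,O} given the Hoelder seminorms M a of the r-th derivatives *)
Definition semi (d r : nat) (gam : R) (M : MI -> R) : R :=
  / fold_right Rmult 1 (map (fun i => gam + INR i) (seq 1 r)) *
  sqrt (sumL (mi d r) (fun a => INR (fact r) / INR (mi_fact a) * (M a) ^ 2)).

(* Main.v *)
Require Import Defs.
From Stdlib Require Import Reals List Lra Lia Arith FunctionalExtensionality.
From Coquelicot Require Import Coquelicot.
Require Import Defs.
Import ListNotations.
Open Scope R_scope.


Lemma sumL_nil {A} (g : A -> R) : sumL nil g = 0.
Proof. reflexivity. Qed.
Lemma sumL_cons {A} (x : A) l g : sumL (x :: l) g = g x + sumL l g.
Proof. reflexivity. Qed.
Lemma sumL_app {A} (l1 l2 : list A) g : sumL (l1 ++ l2) g = sumL l1 g + sumL l2 g.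
Proof. induction l1; simpl; rewrite ?sumL_cons; unfold sumL in *; simpl in *; lra. Qed.
Lemma sumL_map {A B} (h : A -> B) l g : sumL (map h l) g = sumL l (fun x => g (h x)).
Proof. induction l; unfold sumL in *; simpl; [lra| rewrite IHl; lra]. Qed.
Lemma sumL_flat_map {A B} (f : A -> list B) l g :
  sumL (flat_map f l) g = sumL l (fun x => sumL (f x) g).
Proof. induction l; simpl; [reflexivity|]. rewrite sumL_app, sumL_cons, IHl; reflexivity. Qed.
Lemma sumL_ext_in {A} (l : list A) g g' : (forall x, In x l -> g x = g' x) -> sumL l g = sumL l g'.
Proof. induction l; intros H; [reflexivity|]. rewrite !sumL_cons, H, IHl; auto; [intros; apply H|]; simpl; auto. Qed.
Lemma sumL_plus {A} (l : list A) g g' : sumL l (fun x => g x + g' x) = sumL l g + sumL l g'.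
Proof. induction l; [unfold sumL; simpl; lra|]. rewrite !sumL_cons, IHl; lra. Qed.
Lemma sumL_minus {A} (l : list A) g g' : sumL l (fun x => g x - g' x) = sumL l g - sumL l g'.
Proof. induction l; [unfold sumL; simpl; lra|]. rewrite !sumL_cons, IHl; lra. Qed.
Lemma sumL_scal {A} (l : list A) c g : sumL l (fun x => c * g x) = c * sumL l g.
Proof. induction l; [unfold sumL; simpl; lra|]. rewrite !sumL_cons, IHl; lra. Qed.
Lemma sumL_zero {A} (l : list A) : sumL l (fun _ => 0) = 0.
Proof. induction l; [reflexivity|]. rewrite sumL_cons, IHl; lra. Qed.
Lemma sumL_le {A} (l : list A) g g' : (forall x, In x l -> g x <= g' x) -> sumL l g <= sumL l g'.
Proof. induction l; intros H; [unfold sumL; simpl; lra|]. rewrite !sumL_cons.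
  assert (g a <= g' a) by (apply H; simpl; auto).
  assert (sumL l g <= sumL l g') by (apply IHl; intros; apply H; simpl; auto). lra. Qed.
Lemma sumL_nonneg {A} (l : list A) g : (forall x, In x l -> 0 <= g x) -> 0 <= sumL l g.
Proof. intros H. rewrite <- (sumL_zero l). apply sumL_le; auto. Qed.
Lemma sumL_abs {A} (l : list A) g : Rabs (sumL l g) <= sumL l (fun x => Rabs (g x)).
Proof. induction l; [unfold sumL; simpl; rewrite Rabs_R0; lra|]. rewrite !sumL_cons.
  eapply Rle_trans; [apply Rabs_triang|]. lra. Qed.
Lemma sumL_swap {A B} (l1 : list A) (l2 : list B) g :
  sumL l1 (fun a => sumL l2 (fun b => g a b)) = sumL l2 (fun b => sumL l1 (fun a => g a b)).
Proof. induction l1; simpl.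
  - rewrite sumL_nil. symmetry. apply sumL_zero.
  - rewrite sumL_cons, IHl1. rewrite <- sumL_plus. apply sumL_ext_in; intros. rewrite sumL_cons; reflexivity. Qed.

Lemma sumN_sumL n g : sumN n g = sumL (seq 0 n) g.
Proof. reflexivity. Qed.
Lemma sumN_S n g : sumN (S n) g = sumN n g + g n.
Proof. rewrite !sumN_sumL, seq_S, sumL_app. simpl. rewrite sumL_cons, sumL_nil. lra. Qed.
Lemma sumN_Sl n g : sumN (S n) g = g 0%nat + sumN n (fun i => g (S i)).
Proof. rewrite !sumN_sumL. simpl. rewrite sumL_cons, <- seq_shift, sumL_map. reflexivity. Qed.
Lemma sumN_ext n g g' : (forall i, (i < n)%nat -> g i = g' i) -> sumN n g = sumN n g'.
Proof. intros H. apply sumL_ext_in. intros x Hx. apply in_seq in Hx. apply H; lia. Qed.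
Lemma sumN_plus n g g' : sumN n (fun x => g x + g' x) = sumN n g + sumN n g'.
Proof. apply sumL_plus. Qed.
Lemma sumN_scal n c g : sumN n (fun x => c * g x) = c * sumN n g.
Proof. apply sumL_scal. Qed.
Lemma sumN_le n g g' : (forall i, (i < n)%nat -> g i <= g' i) -> sumN n g <= sumN n g'.
Proof. intros H. apply sumL_le. intros x Hx. apply in_seq in Hx. apply H; lia. Qed.
Lemma sumN_abs n g : Rabs (sumN n g) <= sumN n (fun x => Rabs (g x)).
Proof. apply sumL_abs. Qed.
Lemma sumN_nonneg n g : (forall i, (i < n)%nat -> 0 <= g i) -> 0 <= sumN n g.
Proof. intros H. apply sumL_nonneg. intros x Hx. apply in_seq in Hx. apply H; lia. Qed.
Lemma sumN_minus n g g' : sumN n (fun x => g x - g' x) = sumN n g - sumN n g'.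
Proof. apply sumL_minus. Qed.

Definition MIeq := list_eq_dec Nat.eq_dec.

Lemma sumL_delta (l : list MI) (a : MI) (g : MI -> R) :
  NoDup l -> In a l -> sumL l (fun b => if MIeq b a then g b else 0) = g a.
Proof.
  induction l as [|x l IH]; intros Hnd Hin; [destruct Hin|].
  inversion Hnd; subst. rewrite sumL_cons. destruct (MIeq x a) as [->|Hne].
  - rewrite (sumL_ext_in _ _ (fun _ => 0)), sumL_zero; [lra|].
    intros y Hy. destruct (MIeq y a); [subst; contradiction|reflexivity].
  - destruct Hin as [->|Hin]; [congruence|]. rewrite IH; auto; lra.
Qed.

Lemma mi_S d n : mi (S d) n = flat_map (fun k => map (fun b => k :: b) (mi d (n - k))) (seq 0 (S n)).
Proof. reflexivity. Qed.

Lemma In_mi d n a : In a (mi d n) <-> length a = d /\ mi_abs a = n.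
Proof.
  revert n a; induction d as [|d IH]; intros n a.
  - destruct n; simpl; split.
    + intros [<-|[]]; auto.
    + destruct a; simpl; [auto|]. intros [H _]; discriminate.
    + intros [].
    + destruct a; simpl; [unfold mi_abs; simpl; intros [_ H]; discriminate|]. intros [H _]; discriminate.
  - rewrite mi_S, in_flat_map. split.
    + intros [k [Hk Ha]]. apply in_map_iff in Ha. destruct Ha as [b [<- Hb]].
      apply IH in Hb. apply in_seq in Hk. destruct Hb as [Hl Hs]. unfold mi_abs in *. simpl. lia.
    + intros [Hl Hs]. destruct a as [|k b]; [discriminate|]. exists k. unfold mi_abs in Hs; simpl in Hs, Hl.
      split; [apply in_seq; lia|]. apply in_map. apply IH. unfold mi_abs. lia.
Qed.

Lemma NoDup_flat_map' {A B} (f : A -> list B) l :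
  NoDup l -> (forall x, In x l -> NoDup (f x)) ->
  (forall x y b, In x l -> In y l -> In b (f x) -> In b (f y) -> x = y) ->
  NoDup (flat_map f l).
Proof.
  induction l as [|x l IH]; intros Hnd Hf Hdis; simpl; [constructor|].
  inversion Hnd; subst. apply NoDup_app.
  - apply Hf; simpl; auto.
  - apply IH; auto. intros; apply Hf; simpl; auto. intros; eapply Hdis; simpl; eauto.
  - intros b Hb Hb'. apply in_flat_map in Hb'. destruct Hb' as [y [Hy Hby]].
    assert (x = y) by (eapply Hdis; simpl; eauto). subst. contradiction.
Qed.

Lemma NoDup_mi d n : NoDup (mi d n).
Proof.
  revert n; induction d as [|d IH]; intros n.
  - destruct n; simpl; repeat constructor; auto.
  - rewrite mi_S. apply NoDup_flat_map'. apply seq_NoDup.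
    + intros k _. apply NoDup_map_NoDup_ForallPairs; auto.
      intros x y _ _ H. injection H; auto.
    + intros x y b _ _ Hx Hy. apply in_map_iff in Hx, Hy.
      destruct Hx as [? [<- _]]. destruct Hy as [? [H _]]. injection H; auto.
Qed.

Lemma In_mi_lt d q a : In a (mi_lt d q) <-> length a = d /\ (mi_abs a < q)%nat.
Proof.
  unfold mi_lt. rewrite in_flat_map. split.
  - intros [n [Hn Ha]]. apply In_mi in Ha. apply in_seq in Hn. lia.
  - intros [Hl Hs]. exists (mi_abs a). split; [apply in_seq; lia|]. apply In_mi; auto.
Qed.

Lemma NoDup_mi_lt d q : NoDup (mi_lt d q).
Proof.
  unfold mi_lt. apply NoDup_flat_map'. apply seq_NoDup.
  - intros; apply NoDup_mi.
  - intros x y b _ _ Hx Hy. apply In_mi in Hx, Hy. lia.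
Qed.

Lemma mi_zero d : mi d 0 = [repeat 0%nat d].
Proof. induction d; [reflexivity|]. rewrite mi_S. simpl. rewrite IHd. reflexivity. Qed.

Lemma incr_length a i : length (incr a i) = length a.
Proof. revert i; induction a; intros [|i]; simpl; auto. Qed.

Lemma incr_abs a i : (i < length a)%nat -> mi_abs (incr a i) = S (mi_abs a).
Proof. revert i; induction a; intros [|i] H; simpl in *; try lia; unfold mi_abs in *; simpl.
  rewrite IHa by lia. lia. Qed.

Lemma monoAux_incr a i m x : (i < length a)%nat -> monoAux (incr a i) m x = x (m + i)%nat * monoAux a m x.
Proof. revert i m; induction a; intros [|i] m H; simpl in *; try lia.
  - rewrite Nat.add_0_r. ring.
  - rewrite IHa by lia. replace (S m + i)%nat with (m + S i)%nat by lia. ring. Qed.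

Lemma mono_incr a i x : (i < length a)%nat -> mono (incr a i) x = x i * mono a x.
Proof. intros H. unfold mono. rewrite monoAux_incr; auto. Qed.

Lemma monoAux_zero d m x : monoAux (repeat 0%nat d) m x = 1.
Proof. revert m; induction d; intros m; simpl; auto. rewrite IHd. ring. Qed.

Lemma abs0_repeat a : mi_abs a = 0%nat -> a = repeat 0%nat (length a).
Proof. induction a; simpl; auto. unfold mi_abs; simpl. intros H. f_equal; [lia|]. apply IHa. unfold mi_abs; lia. Qed.

Lemma abs_S_decomp a n : mi_abs a = S n ->
  exists i b, (i < length a)%nat /\ length b = length a /\ mi_abs b = n /\ a = incr b i.
Proof.
  revert n; induction a as [|e t IH]; intros n H; [discriminate|].
  unfold mi_abs in H; simpl in H. destruct e as [|e].
  - simpl in H. destruct (IH n H) as [i [b [Hi [Hl [Hs ->]]]]].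
    exists (S i), (0%nat :: b). simpl. repeat split; auto; lia.
  - exists 0%nat, (e :: t). simpl. repeat split; unfold mi_abs in *; simpl in *; auto; try lia.
Qed.

Definition Bc (n k : nat) : R :=
  if (k <=? n)%nat then INR (fact n) / (INR (fact k) * INR (fact (n - k))) else 0.

Lemma Bc_0 n : Bc n 0 = 1.
Proof. unfold Bc. simpl. rewrite Nat.sub_0_r. field. apply INR_fact_neq_0. Qed.

Lemma Bc_pascal m k : Bc (S m) (S k) = Bc m (S k) + Bc m k.
Proof.
  unfold Bc. destruct (Nat.leb_spec (S k) (S m)); destruct (Nat.leb_spec (S k) m);
  destruct (Nat.leb_spec k m); try lia.
  - assert (Hk : (k < m)%nat) by lia. pose proof (pascal m k Hk) as P. unfold Binomial.C in P. simpl Nat.sub in P |- *. lra.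
  - assert (k = m) by lia. subst. rewrite Nat.sub_diag. simpl Nat.sub. rewrite Nat.sub_diag.
    field. repeat split; apply INR_fact_neq_0.
  - lra.
Qed.

Lemma pascal_sum m (T : nat -> R) :
  sumN (S m) (fun k => Bc m k * (T k + T (S k))) = sumN (S (S m)) (fun k => Bc (S m) k * T k).
Proof.
  rewrite (sumN_ext _ _ (fun k => Bc m k * T k + Bc m k * T (S k))) by (intros; ring).
  rewrite sumN_plus.
  assert (E1 : sumN (S m) (fun k => Bc m k * T k) = sumN (S (S m)) (fun k => Bc m k * T k)).
  { rewrite (sumN_S (S m)). assert (Hz : Bc m (S m) = 0) by (unfold Bc; destruct (Nat.leb_spec (S m) m); [lia|reflexivity]). rewrite Hz. lra. }
  rewrite E1, (sumN_Sl (S m) (fun k => Bc m k * T k)), (sumN_Sl (S m) (fun k => Bc (S m) k * T k)).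
  rewrite !Bc_0.
  rewrite (sumN_ext (S m) (fun i => Bc (S m) (S i) * T (S i)) (fun i => Bc m (S i) * T (S i) + Bc m i * T (S i)))
    by (intros; rewrite Bc_pascal; ring).
  rewrite sumN_plus. ring.
Qed.

Lemma mi_fact_cons k b : mi_fact (k :: b) = (fact k * mi_fact b)%nat.
Proof. reflexivity. Qed.

Lemma mi_fact_neq0 a : INR (mi_fact a) <> 0.
Proof. apply not_0_INR. unfold mi_fact. induction a; simpl; [lia|].
  pose proof (fact_neq_0 a). lia. Qed.

Lemma coef_split n k b : (k <= n)%nat ->
  INR (fact n) / INR (mi_fact (k :: b)) = Bc n k * (INR (fact (n - k)) / INR (mi_fact b)).
Proof.
  intros H. unfold Bc. destruct (Nat.leb_spec k n); [|lia]. rewrite mi_fact_cons, mult_INR.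
  field. repeat split; try apply INR_fact_neq_0; apply mi_fact_neq0.
Qed.

Lemma mi_fact_repeat d : mi_fact (repeat 0%nat d) = 1%nat.
Proof. induction d; simpl; auto. unfold mi_fact in *; simpl; rewrite IHd; reflexivity. Qed.

Lemma multi_step d : forall m (K : MI -> R),
  sumL (mi d m) (fun a => INR (fact m) / INR (mi_fact a) * sumN d (fun i => K (incr a i))) =
  sumL (mi d (S m)) (fun b => INR (fact (S m)) / INR (mi_fact b) * K b).
Proof.
  induction d as [|d IH]; intros m K.
  - destruct m; simpl; unfold sumL; simpl; unfold sumN; simpl; lra.
  - set (T := fun k => sumL (mi d (S m - k)) (fun b => INR (fact (S m - k)) / INR (mi_fact b) * K (k :: b))).
    rewrite mi_S, sumL_flat_map, <- sumN_sumL.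
    rewrite (sumN_ext _ _ (fun k => Bc m k * (T k + T (S k)))).
    2:{ intros k Hk. rewrite sumL_map.
        rewrite (sumL_ext_in _ _ (fun b => Bc m k * (INR (fact (m - k)) / INR (mi_fact b) *
                    sumN d (fun i => K (k :: incr b i))) + Bc m k * (INR (fact (m - k)) / INR (mi_fact b) * K (S k :: b)))).
        2:{ intros b _. rewrite sumN_Sl. simpl incr. rewrite coef_split by lia. ring. }
        rewrite sumL_plus, !sumL_scal. rewrite (IH (m - k)%nat (fun b => K (k :: b))).
        unfold T. replace (S (m - k)) with (S m - k)%nat by lia. simpl (S m - S k)%nat. ring. }
    rewrite pascal_sum. rewrite mi_S, sumL_flat_map, <- sumN_sumL.
    apply sumN_ext. intros k Hk. rewrite sumL_map. unfold T. rewrite <- sumL_scal.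
    apply sumL_ext_in. intros b _. rewrite coef_split by lia. ring.
Qed.

Lemma multinomial d m (y : Pt) :
  sumL (mi d m) (fun a => INR (fact m) / INR (mi_fact a) * mono a y) = (sumN d y) ^ m.
Proof.
  induction m.
  - rewrite mi_zero, sumL_cons, sumL_nil. unfold mono. rewrite monoAux_zero, mi_fact_repeat. simpl. field.
  - rewrite <- multi_step. simpl pow. rewrite <- IHm, <- sumL_scal. apply sumL_ext_in.
    intros a Ha. apply In_mi in Ha. destruct Ha as [Hl _].
    rewrite (sumN_ext _ _ (fun i => y i * mono a y)).
    2:{ intros; rewrite mono_incr; auto; lia. }
    rewrite (sumN_ext _ (fun i => y i * mono a y) (fun i => mono a y * y i)) by (intros; ring).
    rewrite sumN_scal. change (sumN d (fun i => y i)) with (sumN d y). ring.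
Qed.


Lemma dpl_plus f g x a b : derivable_pt_lim f x a -> derivable_pt_lim g x b ->
  derivable_pt_lim (fun t => f t + g t) x (a + b).
Proof. intros H1 H2. exact (derivable_pt_lim_plus f g x a b H1 H2). Qed.
Lemma dpl_minus f g x a b : derivable_pt_lim f x a -> derivable_pt_lim g x b ->
  derivable_pt_lim (fun t => f t - g t) x (a - b).
Proof. intros H1 H2. exact (derivable_pt_lim_minus f g x a b H1 H2). Qed.
Lemma dpl_mult f g x a b : derivable_pt_lim f x a -> derivable_pt_lim g x b ->
  derivable_pt_lim (fun t => f t * g t) x (a * g x + f x * b).
Proof. intros H1 H2. exact (derivable_pt_lim_mult f g x a b H1 H2). Qed.
Lemma dpl_const c x : derivable_pt_lim (fun _ => c) x 0.
Proof. exact (derivable_pt_lim_const c x). Qed.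
Lemma dpl_scal c f x a : derivable_pt_lim f x a -> derivable_pt_lim (fun t => c * f t) x (c * a).
Proof. intros H. replace (c * a) with (0 * f x + c * a) by ring.
  apply (dpl_mult (fun _ => c) f); auto. apply dpl_const. Qed.
Lemma dpl_ext f g x a : (forall t, f t = g t) -> derivable_pt_lim f x a -> derivable_pt_lim g x a.
Proof. intros H H1. replace g with f; auto. apply functional_extensionality; auto. Qed.
Lemma dpl_eq f x a b : a = b -> derivable_pt_lim f x a -> derivable_pt_lim f x b.
Proof. intros ->; auto. Qed.

Lemma dpl_sumL {A} (l : list A) (g g' : A -> R -> R) x :
  (forall i, In i l -> derivable_pt_lim (g i) x (g' i x)) ->
  derivable_pt_lim (fun t => sumL l (fun i => g i t)) x (sumL l (fun i => g' i x)).
Proof.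
  induction l as [|i l IH]; intros H.
  - apply (dpl_ext (fun _ => 0)); [intros; reflexivity|]. apply dpl_const.
  - apply (dpl_ext (fun t => g i t + sumL l (fun j => g j t))); [intros; reflexivity|].
    rewrite sumL_cons. apply dpl_plus; [apply H; simpl; auto|]. apply IH. intros; apply H; simpl; auto.
Qed.

Lemma dpl_pow_shift (n : nat) (a x : R) :
  derivable_pt_lim (fun t => (t - a) ^ n) x (INR n * (x - a) ^ pred n).
Proof.
  apply is_derive_Reals.
  assert (H : is_derive (fun t => t - a) x 1).
  { apply is_derive_Reals. replace 1 with (1 - 0) by ring. apply dpl_minus.
    apply derivable_pt_lim_id. apply dpl_const. }
  pose proof (is_derive_pow _ n _ _ H) as H2. simpl in H2. rewrite Rmult_1_r in H2. exact H2.
Qed.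

Definition pw (t p : R) : R := if Rle_dec t 0 then 0 else Rpower t p.

Lemma pw_pos t p : 0 < t -> pw t p = Rpower t p.
Proof. intros H. unfold pw. destruct (Rle_dec t 0); [lra|auto]. Qed.
Lemma pw_nonneg t p : 0 <= pw t p.
Proof. unfold pw. destruct (Rle_dec t 0); [lra|]. unfold Rpower. left; apply exp_pos. Qed.
Lemma pw_0 p : pw 0 p = 0.
Proof. unfold pw. destruct (Rle_dec 0 0); lra. Qed.

Lemma Rpower_small p : 0 < p -> forall eps, 0 < eps -> exists del, 0 < del /\
  forall t, 0 < t < del -> Rpower t p < eps.
Proof.
  intros Hp eps He. exists (Rpower eps (/ p)). split; [unfold Rpower; apply exp_pos|].
  intros t [Ht1 Ht2]. replace eps with (Rpower (Rpower eps (/ p)) p).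
  - apply Rlt_Rpower_l; auto.
  - rewrite Rpower_mult. rewrite Rinv_l by lra. apply Rpower_1; auto.
Qed.

Lemma pw_cont p x : 0 < p -> continuity_pt (fun t => pw t p) x.
Proof.
  intros Hp. destruct (Rtotal_order x 0) as [Hx|[Hx|Hx]].
  - intros eps He. exists (- x). split; [lra|]. intros y [_ Hy]. simpl in *. unfold R_dist in *.
    unfold pw. destruct (Rle_dec y 0); destruct (Rle_dec x 0); try lra.
    + rewrite Rminus_0_r, Rabs_R0; lra.
    + apply Rabs_def2 in Hy. lra.
  - subst. intros eps He. destruct (Rpower_small p Hp eps He) as [del [Hd Hs]].
    exists del. split; auto. intros y [_ Hy]. simpl in *. unfold R_dist in *. rewrite pw_0, Rminus_0_r.
    rewrite Rminus_0_r in Hy. unfold pw. destruct (Rle_dec y 0).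
    + rewrite Rabs_R0; lra.
    + rewrite Rabs_pos_eq by (unfold Rpower; left; apply exp_pos). apply Hs.
      apply Rabs_def2 in Hy. lra.
  - apply derivable_continuous_pt. exists (p * Rpower x (p - 1)).
    apply is_derive_Reals. apply (is_derive_ext_loc (fun t => Rpower t p)).
    + exists (mkposreal x Hx). intros y Hy. unfold ball in Hy; simpl in Hy. unfold AbsRing_ball, abs, minus, plus, opp in Hy. simpl in Hy.
      apply Rabs_def2 in Hy. rewrite pw_pos by lra. reflexivity.
    + apply is_derive_Reals. apply derivable_pt_lim_power; auto.
Qed.

Lemma pw_deriv p x : 0 < x -> derivable_pt_lim (fun t => pw t (p + 1)) x ((p + 1) * pw x p).
Proof.
  intros Hx. rewrite pw_pos by auto. apply is_derive_Reals.
  apply (is_derive_ext_loc (fun t => Rpower t (p + 1))).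
  + exists (mkposreal x Hx). intros y Hy. unfold ball in Hy; simpl in Hy. unfold AbsRing_ball, abs, minus, plus, opp in Hy. simpl in Hy.
    apply Rabs_def2 in Hy. rewrite pw_pos by lra. reflexivity.
  + apply is_derive_Reals. replace p with (p + 1 - 1) at 2 by ring. apply derivable_pt_lim_power; auto.
Qed.

Lemma cmp_half (u u' : R -> R) (b C : R) : 0 < b -> 0 <= C -> u 0 = 0 ->
  (forall t, 0 <= t <= 1 -> derivable_pt_lim u t (u' t)) ->
  (forall t, 0 <= t <= 1 -> u' t <= C * pw t b) ->
  forall t, 0 <= t <= 1 -> u t <= C / (b + 1) * pw t (b + 1).
Proof.
  intros Hb HC Hu0 Hd Hbd t Ht.
  destruct (Req_dec t 0) as [->|Ht0]; [rewrite Hu0, pw_0; lra|].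
  set (v := fun s => u s - C / (b + 1) * pw s (b + 1)).
  destruct (MVT_gen v 0 t (fun s => u' s - C * pw s b)) as [c [Hc Heq]].
  - intros x Hx. rewrite Rmin_left, Rmax_right in Hx by lra.
    apply is_derive_Reals. unfold v. apply dpl_minus. apply Hd; lra.
    replace (C * pw x b) with (C / (b + 1) * ((b + 1) * pw x b)) by (field; lra).
    apply dpl_scal. apply pw_deriv; lra.
  - intros x Hx. rewrite Rmin_left, Rmax_right in Hx by lra. unfold v.
    apply continuity_pt_minus.
    + apply derivable_continuous_pt. exists (u' x). apply Hd; lra.
    + apply continuity_pt_mult. apply continuity_pt_const. intros ? ?; reflexivity.
      apply pw_cont. lra.
  - rewrite Rmin_left, Rmax_right in Hc by lra.
    assert (u' c - C * pw c b <= 0) by (pose proof (Hbd c ltac:(lra)); lra).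
    unfold v in Heq. rewrite Hu0, pw_0 in Heq. 
    assert ((u' c - C * pw c b) * (t - 0) <= 0).
    { apply Rmult_le_0_r; lra. }
    lra.
Qed.

Lemma cmp (u u' : R -> R) (b C : R) : 0 < b -> 0 <= C -> u 0 = 0 ->
  (forall t, 0 <= t <= 1 -> derivable_pt_lim u t (u' t)) ->
  (forall t, 0 <= t <= 1 -> Rabs (u' t) <= C * pw t b) ->
  forall t, 0 <= t <= 1 -> Rabs (u t) <= C / (b + 1) * pw t (b + 1).
Proof.
  intros Hb HC Hu0 Hd Hbd t Ht. apply Rabs_le. split.
  - cut (- u t <= C / (b + 1) * pw t (b + 1)); [lra|].
    apply (cmp_half (fun s => - u s) (fun s => - u' s)); auto.
    + rewrite Hu0; ring.
    + intros s Hs. apply (dpl_ext (fun s => 0 - u s)); [intros; ring|].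
      replace (- u' s) with (0 - u' s) by ring. apply dpl_minus; [apply dpl_const|auto].
    + intros s Hs. pose proof (Hbd s Hs). apply Rabs_le_between in H. lra.
  - apply (cmp_half u u'); auto. intros s Hs. pose proof (Hbd s Hs). apply Rabs_le_between in H. lra.
Qed.


Lemma dpl_sumN n (g g' : nat -> R -> R) x :
  (forall i, (i < n)%nat -> derivable_pt_lim (g i) x (g' i x)) ->
  derivable_pt_lim (fun t => sumN n (fun i => g i t)) x (sumN n (fun i => g' i x)).
Proof. intros H. apply dpl_sumL. intros i Hi. apply in_seq in Hi. apply H. lia. Qed.

Lemma Rpower_1_base x : Rpower 1 x = 1.
Proof. unfold Rpower. rewrite ln_1, Rmult_0_r, exp_0. reflexivity. Qed.

Definition prodg (r : nat) (gam : R) : R := fold_right Rmult 1 (map (fun i => gam + INR i) (seq 1 r)).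

Lemma fold_mult_init l a : fold_right Rmult a l = fold_right Rmult 1 l * a.
Proof. induction l; simpl; [ring|]. rewrite IHl. ring. Qed.

Lemma prodg_S r gam : prodg (S r) gam = prodg r gam * (gam + INR (S r)).
Proof. unfold prodg. rewrite seq_S, map_app, fold_right_app. simpl. rewrite fold_mult_init.
  replace (1 + r)%nat with (S r) by lia. ring. Qed.

Lemma prodg_pos r gam : 0 < gam -> 0 < prodg r gam.
Proof. intros H. induction r; [unfold prodg; simpl; lra|]. rewrite prodg_S.
  apply Rmult_lt_0_compat; auto. pose proof (pos_INR (S r)). lra. Qed.

Section Iter.
Variable Phi : nat -> R -> R.
Variable r : nat.

Definition Qp (n j : nat) (t : R) : R := sumN (S n) (fun l => Phi (j + l) 0 * t ^ l / INR (fact l)).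

Lemma Qp_0 n j : Qp n j 0 = Phi j 0.
Proof. unfold Qp. rewrite sumN_Sl. rewrite (sumN_ext _ _ (fun _ => 0)), sumN_sumL, sumL_zero.
  - simpl. rewrite Nat.add_0_r. field.
  - intros i _. simpl pow. unfold Rdiv. ring. Qed.

Lemma Qp_deriv n j t : derivable_pt_lim (Qp (S n) j) t (Qp n (S j) t).
Proof.
  unfold Qp. apply (dpl_ext (fun t => Phi (j + 0) 0 +
     sumN (S n) (fun l => Phi (j + S l) 0 * t ^ S l / INR (fact (S l))))).
  { intros t0; rewrite (sumN_Sl (S n)). f_equal. simpl. field. }
  replace (sumN (S n) (fun l => Phi (S j + l) 0 * t ^ l / INR (fact l)))
    with (0 + sumN (S n) (fun l => Phi (S j + l) 0 * t ^ l / INR (fact l))) by ring.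
  apply dpl_plus; [apply dpl_const|].
  apply (dpl_sumN (S n) (fun l t => Phi (j + S l) 0 * t ^ S l / INR (fact (S l)))
     (fun l t => Phi (S j + l) 0 * t ^ l / INR (fact l))). intros l _.
  apply (dpl_ext (fun t => (Phi (j + S l) 0 / INR (fact (S l))) * (t - 0) ^ S l)).
  { intros; rewrite Rminus_0_r; field. apply INR_fact_neq_0. }
  eapply dpl_eq; [|apply dpl_scal, dpl_pow_shift].
  simpl pred. rewrite Rminus_0_r. replace (S j + l)%nat with (j + S l)%nat by lia.
  rewrite fact_simpl, mult_INR. field. split; [apply INR_fact_neq_0|]. apply not_0_INR; lia.
Qed.

Definition uu (j : nat) (t : R) : R := Phi j t - Qp (r - j) j t.

Lemma iter_bound (C gam : R) : 0 <= C -> 0 < gam <= 1 ->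
  (forall m, (m < r)%nat -> forall t, 0 <= t <= 1 -> derivable_pt_lim (Phi m) t (Phi (S m) t)) ->
  (forall t, 0 <= t <= 1 -> Rabs (Phi r t - Phi r 0) <= C * pw t gam) ->
  Rabs (Phi 0 1 - sumN (S r) (fun l => Phi l 0 / INR (fact l))) <= C / prodg r gam.
Proof.
  intros HC Hg HD HH.
  assert (Hm : forall m, (m <= r)%nat -> forall t, 0 <= t <= 1 ->
    Rabs (uu (r - m) t) <= C / prodg m gam * pw t (gam + INR m)).
  { induction m; intros Hmr t Ht.
    - unfold uu. rewrite Nat.sub_0_r, Nat.sub_diag. unfold Qp. rewrite sumN_S. simpl sumN.
      unfold sumN. simpl. rewrite Nat.add_0_r. unfold prodg. simpl.
      replace (Phi r t - (0 + Phi r 0 * 1 / 1)) with (Phi r t - Phi r 0) by field.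
      rewrite Rplus_0_r. replace (C / 1) with C by field. apply HH; auto.
    - set (j := (r - S m)%nat).
      assert (Hj : (r - m)%nat = S j) by (unfold j; lia).
      rewrite prodg_S, S_INR.
      replace (C / (prodg m gam * (gam + (INR m + 1))) * pw t (gam + (INR m + 1)))
        with (C / prodg m gam / ((gam + INR m) + 1) * pw t ((gam + INR m) + 1)).
      2:{ replace (gam + (INR m + 1)) with (gam + INR m + 1) by ring. field.
          pose proof (prodg_pos m gam ltac:(lra)). pose proof (pos_INR m). split; lra. }
      apply (cmp (uu j) (uu (S j))); auto.
      + pose proof (pos_INR m); lra.
      + apply Rmult_le_pos; auto. left; apply Rinv_0_lt_compat, prodg_pos; lra.
      + unfold uu. rewrite Qp_0. ring.
      + intros s Hs. unfold uu. replace (r - j)%nat with (S (r - S j)) by lia.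
        apply dpl_minus. apply HD; auto. lia. apply Qp_deriv.
      + intros s Hs. rewrite <- Hj. apply IHm; auto. lia. }
  pose proof (Hm r (le_n r) 1 ltac:(lra)) as H1. rewrite Nat.sub_diag in H1.
  unfold uu in H1. rewrite Nat.sub_0_r in H1. rewrite pw_pos, Rpower_1_base in H1 by lra.
  rewrite Rmult_1_r in H1. unfold Qp in H1.
  rewrite (sumN_ext _ _ (fun l => Phi l 0 / INR (fact l))) in H1; auto.
  intros i _. simpl. rewrite pow1. field. apply INR_fact_neq_0.
Qed.
End Iter.


Definition nrm (d : nat) (h : Pt) : R := sqrt (sumN d (fun c => (h c) ^ 2)).

Lemma sumN_single n g i : (i < n)%nat -> (forall j, (j < n)%nat -> 0 <= g j) -> g i <= sumN n g.
Proof.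
  induction n; intros Hi Hg; [lia|]. rewrite sumN_S.
  destruct (Nat.eq_dec i n) as [->|Hne].
  - pose proof (sumN_nonneg n g ltac:(intros; apply Hg; lia)). lra.
  - pose proof (IHn ltac:(lia) ltac:(intros; apply Hg; lia)). pose proof (Hg n ltac:(lia)). lra.
Qed.

Lemma edist_nonneg d x y : 0 <= edist d x y.
Proof. apply sqrt_pos. Qed.

Lemma coord_le d x y i : (i < d)%nat -> Rabs (x i - y i) <= edist d x y.
Proof.
  intros Hi. unfold edist. rewrite <- sqrt_Rsqr_abs. apply sqrt_le_1_alt.
  unfold Rsqr. replace ((x i - y i) * (x i - y i)) with ((x i - y i) ^ 2) by ring.
  apply (sumN_single d (fun c => (x c - y c) ^ 2) i); auto. intros; apply pow2_ge_0.
Qed.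

Lemma edist_bound d x y h s : 0 <= s ->
  (forall c, (c < d)%nat -> Rabs (y c - x c) <= s * Rabs (h c)) -> edist d y x <= s * nrm d h.
Proof.
  intros Hs H. unfold edist, nrm. rewrite <- (sqrt_pow2 s) by auto. rewrite <- sqrt_mult by (try apply pow2_ge_0; apply sumN_nonneg; intros; apply pow2_ge_0).
  apply sqrt_le_1_alt. rewrite <- sumN_scal. apply sumN_le. intros c Hc.
  pose proof (H c Hc). pose proof (Rabs_pos (y c - x c)).
  rewrite <- (pow2_abs (y c - x c)), <- (pow2_abs (h c)).
  replace (s ^ 2 * Rabs (h c) ^ 2) with ((s * Rabs (h c)) ^ 2) by ring.
  apply pow_incr. lra.
Qed.

Lemma edist_sym d x y : edist d x y = edist d y x.
Proof. unfold edist. f_equal. apply sumN_ext. intros; ring. Qed.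

Lemma edist_zero_pt_eq d x y : edist d x y = 0 -> pt_eq d x y.
Proof. intros H i Hi. pose proof (coord_le d x y i Hi). pose proof (Rabs_pos (x i - y i)).
  assert (Rabs (x i - y i) = 0) by lra. destruct (Req_dec (x i - y i) 0); [lra|]. pose proof (Rabs_no_R0 _ H3). lra. Qed.

Lemma pt_eq_edist_zero d x y : pt_eq d x y -> edist d x y = 0.
Proof. intros H. unfold edist. rewrite (sumN_ext _ _ (fun _ => 0)). rewrite sumN_sumL, sumL_zero. apply sqrt_0.
  intros i Hi. rewrite H; auto. ring. Qed.

Lemma ContOn_edist0 d Om g x y : ContOn d Om g -> Om x -> Om y -> edist d y x = 0 -> g y = g x.
Proof.
  intros Hc Hx Hy He. destruct (Req_dec (g y) (g x)) as [E|E]; auto.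
  assert (Hp : 0 < Rabs (g y - g x)) by (apply Rabs_pos_lt; lra).
  destruct (Hc x Hx _ Hp) as [del [Hd Hdel]]. specialize (Hdel y Hy ltac:(lra)). lra.
Qed.

Lemma ContOn_const d Om c : ContOn d Om (fun _ => c).
Proof. intros x _ eps He. exists 1. split; [lra|]. intros. rewrite Rminus_diag, Rabs_R0; lra. Qed.

Lemma ContOn_coord d Om i a : (i < d)%nat -> ContOn d Om (fun x => x i - a).
Proof. intros Hi x _ eps He. exists eps. split; auto. intros y _ Hy.
  replace (y i - a - (x i - a)) with (y i - x i) by ring. eapply Rle_lt_trans; [apply coord_le; eauto|auto]. Qed.

Lemma ContOn_plus d Om g h : ContOn d Om g -> ContOn d Om h -> ContOn d Om (fun x => g x + h x).
Proof.
  intros Hg Hh x Hx eps He. destruct (Hg x Hx (eps/2) ltac:(lra)) as [d1 [Hd1 H1]].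
  destruct (Hh x Hx (eps/2) ltac:(lra)) as [d2 [Hd2 H2]].
  exists (Rmin d1 d2). split; [apply Rmin_pos; auto|]. intros y Hy Hyx.
  specialize (H1 y Hy ltac:(pose proof (Rmin_l d1 d2); lra)). specialize (H2 y Hy ltac:(pose proof (Rmin_r d1 d2); lra)).
  replace (g y + h y - (g x + h x)) with ((g y - g x) + (h y - h x)) by ring.
  eapply Rle_lt_trans; [apply Rabs_triang|]. lra.
Qed.

Lemma ContOn_mult d Om g h : ContOn d Om g -> ContOn d Om h -> ContOn d Om (fun x => g x * h x).
Proof.
  intros Hg Hh x Hx eps He.
  set (A := Rabs (g x) + 1). set (B := Rabs (h x) + 1).
  assert (HA : 0 < A) by (unfold A; pose proof (Rabs_pos (g x)); lra).
  assert (HB : 0 < B) by (unfold B; pose proof (Rabs_pos (h x)); lra).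
  destruct (Hg x Hx (eps / (2 * B))) as [d1 [Hd1 H1]]. { apply Rdiv_lt_0_compat; lra. }
  destruct (Hh x Hx (Rmin 1 (eps / (2 * A)))) as [d2 [Hd2 H2]].
  { apply Rmin_pos; [lra|]. apply Rdiv_lt_0_compat; lra. }
  exists (Rmin d1 d2). split; [apply Rmin_pos; auto|]. intros y Hy Hyx.
  specialize (H1 y Hy ltac:(pose proof (Rmin_l d1 d2); lra)). specialize (H2 y Hy ltac:(pose proof (Rmin_r d1 d2); lra)).
  pose proof (Rmin_l 1 (eps / (2 * A))). pose proof (Rmin_r 1 (eps / (2 * A))).
  replace (g y * h y - g x * h x) with ((g y - g x) * h y + g x * (h y - h x)) by ring.
  eapply Rle_lt_trans; [apply Rabs_triang|]. rewrite !Rabs_mult.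
  assert (Hhy : Rabs (h y) <= B).
  { unfold B. replace (h y) with (h x + (h y - h x)) by ring. eapply Rle_trans; [apply Rabs_triang|]. lra. }
  assert (Hgx : Rabs (g x) <= A) by (unfold A; lra).
  assert (E1 : Rabs (g y - g x) * Rabs (h y) <= eps / (2 * B) * B).
  { apply Rmult_le_compat; try apply Rabs_pos; lra. }
  assert (E2 : Rabs (g x) * Rabs (h y - h x) <= A * (eps / (2 * A))).
  { apply Rmult_le_compat; try apply Rabs_pos; lra. }
  assert (E3 : Rabs (g x) * Rabs (h y - h x) < A * (eps / (2 * A)) \/ Rabs (g y - g x) * Rabs (h y) < eps / (2 * B) * B).
  { destruct (Req_dec (Rabs (h y - h x)) 0) as [Z|Z].
    - left. rewrite Z, Rmult_0_r. apply Rmult_lt_0_compat; auto. apply Rdiv_lt_0_compat; lra.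
    - left. apply Rle_lt_trans with (A * Rabs (h y - h x)).
      + apply Rmult_le_compat_r; [apply Rabs_pos|lra].
      + apply Rmult_lt_compat_l; lra. }
  replace (eps / (2 * B) * B) with (eps / 2) in * by (field; lra).
  replace (A * (eps / (2 * A))) with (eps / 2) in * by (field; lra). lra.
Qed.

Lemma ContOn_pow d Om g n : ContOn d Om g -> ContOn d Om (fun x => g x ^ n).
Proof. intros H. induction n; simpl. apply ContOn_const. apply ContOn_mult; auto. Qed.

Lemma ContOn_sumL {A} d Om (l : list A) (g : A -> Pt -> R) :
  (forall i, In i l -> ContOn d Om (g i)) -> ContOn d Om (fun x => sumL l (fun i => g i x)).
Proof.
  induction l; intros H. exact (ContOn_const d Om 0).
  apply (ContOn_plus d Om (g a) (fun x => sumL l (fun i => g i x))). apply H; simpl; auto.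
  apply IHl. intros; apply H; simpl; auto.
Qed.


Definition ffR (n m : nat) : R := if (m <=? n)%nat then INR (fact n) / INR (fact (n - m)) else 0.

Fixpoint dAux (z : Pt) (b a : MI) (i : nat) (x : Pt) : R :=
  match b, a with
  | e :: t, u :: v => ffR e u * (x i - z i) ^ (e - u) * dAux z t v (S i) x
  | _, _ => 1
  end.

Lemma dAux_frame z b a i x y : (forall c, (i <= c)%nat -> x c = y c) -> dAux z b a i x = dAux z b a i y.
Proof.
  revert a i; induction b as [|e t IH]; intros [|u v] i H; simpl; auto.
  rewrite (H i) by lia. rewrite (IH v (S i)); auto. intros; apply H; lia.
Qed.

Lemma ffR_0 n : ffR n 0 = 1.
Proof. unfold ffR. simpl. rewrite Nat.sub_0_r. field. apply INR_fact_neq_0. Qed.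

Lemma dAux_repeat0 z b i x : dAux z b (repeat 0%nat (length b)) i x = monoAux b i (fun c => x c - z c).
Proof. revert i; induction b; intros i; simpl; auto. rewrite IHb, ffR_0, Nat.sub_0_r. ring. Qed.

Lemma upd_same x j t : upd x j t j = t.
Proof. unfold upd. rewrite Nat.eqb_refl. reflexivity. Qed.
Lemma upd_other x j t c : c <> j -> upd x j t c = x c.
Proof. intros H. unfold upd. destruct (Nat.eqb_spec c j); [lia|reflexivity]. Qed.

Lemma ffR_step e u y : ffR e u * (INR (e - u) * y ^ pred (e - u)) = ffR e (S u) * y ^ (e - S u).
Proof.
  unfold ffR. destruct (Nat.leb_spec u e); destruct (Nat.leb_spec (S u) e); try lia.
  - replace (e - u)%nat with (S (e - S u)) by lia. simpl pred. rewrite fact_simpl, mult_INR.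
    field. split; [apply INR_fact_neq_0|]. apply not_0_INR; lia.
  - replace (e - u)%nat with 0%nat by lia. simpl. ring.
  - ring.
Qed.

Lemma dAux_deriv z b : forall a i c x, length a = length b -> (c < length b)%nat ->
  derivable_pt_lim (fun t => dAux z b a i (upd x (i + c) t)) (x (i + c)%nat) (dAux z b (incr a c) i x).
Proof.
  induction b as [|e t IH]; intros [|u v] i c x Hl Hc; simpl in *; try lia.
  destruct c as [|c].
  - rewrite Nat.add_0_r. simpl incr. simpl dAux.
    apply (dpl_ext (fun s => (ffR e u * dAux z t v (S i) x) * (s - z i) ^ (e - u))).
    { intros s. rewrite upd_same. rewrite (dAux_frame z t v (S i) (upd x i s) x). ring.
      intros; apply upd_other; lia. }
    eapply dpl_eq; [|apply dpl_scal, dpl_pow_shift].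
    rewrite <- ffR_step. ring.
  - simpl incr. simpl dAux.
    apply (dpl_ext (fun s => (ffR e u * (x i - z i) ^ (e - u)) * dAux z t v (S i) (upd x (S i + c) s))).
    { intros s. rewrite upd_other by lia. replace (i + S c)%nat with (S i + c)%nat by lia. reflexivity. }
    replace (i + S c)%nat with (S i + c)%nat by lia.
    apply dpl_scal. apply IH; lia.
Qed.

Lemma dAux_at_z z b : forall a i, length a = length b ->
  dAux z b a i z = if MIeq b a then INR (mi_fact a) else 0.
Proof.
  induction b as [|e t IH]; intros [|u v] i Hl; cbn [dAux length] in *; try lia.
  - destruct (MIeq [] []); [|congruence]. reflexivity.
  - rewrite IH by lia. rewrite Rminus_diag.
    destruct (MIeq (e :: t) (u :: v)) as [E|E].
    + injection E as -> ->. destruct (MIeq v v) as [E0|C0]; [|congruence].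
      rewrite Nat.sub_diag. unfold ffR. rewrite Nat.leb_refl, Nat.sub_diag.
      rewrite mi_fact_cons, mult_INR. simpl pow. simpl fact. simpl INR. field.
    + destruct (MIeq t v) as [->|Hne]; [|ring].
      destruct (Nat.eq_dec e u); [subst; congruence|].
      destruct (Nat.leb_spec u e).
      * replace (e - u)%nat with (S (e - u - 1)) by lia. simpl. ring.
      * unfold ffR. destruct (Nat.leb_spec u e); [lia|]. ring.
Qed.

Lemma dAux_cont z d Om b : forall a i, (i + length b <= d)%nat -> ContOn d Om (dAux z b a i).
Proof.
  induction b as [|e t IH]; intros [|u v] i Hl; simpl in *.
  - exact (ContOn_const d Om 1).
  - exact (ContOn_const d Om 1).
  - exact (ContOn_const d Om 1).
  - apply (ContOn_mult d Om (fun x => ffR e u * (x i - z i) ^ (e - u))).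
    + apply (ContOn_mult d Om (fun _ => ffR e u)). apply ContOn_const.
      apply (ContOn_pow d Om (fun x => x i - z i)). apply ContOn_coord. lia.
    + apply IH. lia.
Qed.

Definition Rep (d n : nat) (g : Pt -> R) : Prop :=
  exists L : list (R * MI), (forall p, In p L -> length (snd p) = d /\ (mi_abs (snd p) < n)%nat) /\
    forall x, g x = sumL L (fun p => fst p * mono (snd p) x).

Lemma Rep_poly d q g : Rep d q g -> exists cf, forall x, poly d q cf x = g x.
Proof.
  intros [L [HL Hg]]. exists (fun a => sumL L (fun p => if MIeq a (snd p) then fst p else 0)).
  intros x. rewrite Hg. unfold poly.
  rewrite (sumL_ext_in _ _ (fun a => sumL L (fun p => if MIeq a (snd p) then fst p * mono a x else 0))).
  2:{ intros a _. rewrite Rmult_comm, <- sumL_scal. apply sumL_ext_in. intros p _. destruct (MIeq a (snd p)); ring. }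
  rewrite sumL_swap. apply sumL_ext_in. intros p Hp.
  apply (sumL_delta _ _ (fun a => fst p * mono a x)). apply NoDup_mi_lt. apply In_mi_lt. apply HL; auto.
Qed.

Lemma Rep_mono d n n' g : (n <= n')%nat -> Rep d n g -> Rep d n' g.
Proof. intros H [L [HL Hg]]. exists L. split; auto. intros p Hp. specialize (HL p Hp). lia. Qed.

Lemma Rep_shift d (z : Pt) : forall m b, length b = d -> mi_abs b = m ->
  Rep d (S m) (fun x => mono b (fun c => x c - z c)).
Proof.
  induction m; intros b Hl Hs.
  - exists [(1, repeat 0%nat d)]. split.
    + intros p [<-|[]]. simpl. rewrite repeat_length. split; auto. unfold mi_abs. clear. induction d; simpl; auto.
    + intros x. apply abs0_repeat in Hs. rewrite Hs, Hl. rewrite sumL_cons, sumL_nil. simpl. unfold mono. rewrite !monoAux_zero. ring.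
  - destruct (abs_S_decomp b m Hs) as [i [b' [Hi [Hl' [Hs' ->]]]]].
    destruct (IHm b' ltac:(lia) Hs') as [L [HL Hg]].
    exists (map (fun p => (fst p, incr (snd p) i)) L ++ map (fun p => (- z i * fst p, snd p)) L). split.
    + intros p Hp. apply in_app_or in Hp. destruct Hp as [Hp|Hp]; apply in_map_iff in Hp; destruct Hp as [p' [<- Hp']];
      destruct (HL p' Hp'); simpl; split; auto; try lia.
      rewrite incr_length; auto. rewrite incr_abs; lia.
    + intros x. rewrite sumL_app, !sumL_map. simpl.
      rewrite mono_incr by (rewrite incr_length in Hi; lia). rewrite Hg.
      rewrite (sumL_ext_in _ (fun p => fst p * mono (incr (snd p) i) x) (fun p => x i * (fst p * mono (snd p) x))).
      2:{ intros p Hp. destruct (HL p Hp). rewrite mono_incr by lia. ring. }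
      rewrite (sumL_ext_in _ (fun p => - z i * fst p * mono (snd p) x) (fun p => - z i * (fst p * mono (snd p) x))) by (intros; ring).
      rewrite !sumL_scal. ring.
Qed.

Lemma Rep_lin d n (z : Pt) (l : list MI) (coef : MI -> R) :
  (forall b, In b l -> length b = d /\ (mi_abs b < n)%nat) ->
  Rep d n (fun x => sumL l (fun b => coef b * mono b (fun c => x c - z c))).
Proof.
  induction l as [|b l IH]; intros H.
  - exists []. split; [intros p []|]. intros; reflexivity.
  - destruct (H b ltac:(simpl; auto)) as [Hb1 Hb2].
    assert (Hle : (S (mi_abs b) <= n)%nat) by lia.
    destruct (Rep_mono d _ n _ Hle (Rep_shift d z (mi_abs b) b Hb1 eq_refl)) as [Lb [HLb Hgb]].
    destruct (IH ltac:(intros; apply H; simpl; auto)) as [L [HL Hg]].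
    exists (map (fun p => (coef b * fst p, snd p)) Lb ++ L). split.
    + intros p Hp. apply in_app_or in Hp. destruct Hp as [Hp|Hp]; auto.
      apply in_map_iff in Hp. destruct Hp as [p' [<- Hp']]. simpl. auto.
    + intros x. rewrite sumL_cons, sumL_app, sumL_map, Hgb, Hg. simpl.
      rewrite <- sumL_scal. f_equal. apply sumL_ext_in; intros; ring.
Qed.


Lemma fin_delta n (P : nat -> R -> Prop) :
  (forall i del del', P i del -> 0 < del' <= del -> P i del') ->
  (forall i, (i < n)%nat -> exists del, 0 < del /\ P i del) ->
  exists del, 0 < del /\ forall i, (i < n)%nat -> P i del.
Proof.
  intros Hmono H. induction n.
  - exists 1. split; [lra|]. intros; lia.
  - destruct IHn as [d1 [Hd1 H1]]. intros; apply H; lia.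
    destruct (H n ltac:(lia)) as [d2 [Hd2 H2]].
    exists (Rmin d1 d2). split; [apply Rmin_pos; auto|]. intros i Hi.
    destruct (Nat.eq_dec i n) as [->|Hne].
    + apply (Hmono n d2); auto. split; [apply Rmin_pos; auto|apply Rmin_r].
    + apply (Hmono i d1); [apply H1; lia|]. split; [apply Rmin_pos; auto|apply Rmin_l].
Qed.

Lemma telescope n (u : nat -> R) : u n - u 0%nat = sumN n (fun m => u (S m) - u m).
Proof. induction n; [unfold sumN; simpl; ring|]. rewrite sumN_S, <- IHn. ring. Qed.

Lemma upd_upd x j t t' : upd (upd x j t) j t' = upd x j t'.
Proof. apply functional_extensionality. intros c. unfold upd. destruct (Nat.eqb c j); auto. Qed.

Section Chain.
Variables (d : nat) (Om : Pt -> Prop) (r : nat) (f : Pt -> R) (F : MI -> Pt -> R).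
Hypothesis HF : DerivFamily d Om r f F.
Hypothesis HOm : IsOpen d Om.

Lemma chain (a : MI) (p h : Pt) (t0 : R) :
  length a = d -> (mi_abs a < r)%nat -> Om (fun c => p c + t0 * h c) ->
  derivable_pt_lim (fun t => F a (fun c => p c + t * h c)) t0
    (sumN d (fun i => F (incr a i) (fun c => p c + t0 * h c) * h i)).
Proof.
  intros Hl Ha Hin. destruct HF as [HF0 [HFc HFd]].
  set (x0 := fun c => p c + t0 * h c). fold x0 in Hin |- *.
  intros eps He.
  destruct (HOm x0 Hin) as [rho [Hrho Hball]].
  set (H1 := sumN d (fun i => Rabs (h i))).
  assert (HH1 : 0 <= H1) by (apply sumN_nonneg; intros; apply Rabs_pos).
  set (eps' := eps / (H1 + 1)).
  assert (He' : 0 < eps') by (unfold eps'; apply Rdiv_lt_0_compat; lra).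
  destruct (fin_delta d (fun i del => forall y, Om y -> edist d y x0 < del ->
      Rabs (F (incr a i) y - F (incr a i) x0) < eps')) as [dc [Hdc Hc]].
  { intros i del del' Hp Hd y Hy Hyd. apply Hp; auto. lra. }
  { intros i Hi. apply (HFc (incr a i)). rewrite incr_length; auto. rewrite incr_abs by lia. lia. auto. auto. }
  set (R0 := Rmin rho dc). set (Nh := nrm d h + 1).
  assert (HR0 : 0 < R0) by (apply Rmin_pos; auto).
  assert (HNh : 0 < Nh) by (unfold Nh; pose proof (sqrt_pos (sumN d (fun c => h c ^ 2))); unfold nrm; lra).
  assert (Hdel : 0 < R0 / Nh) by (apply Rdiv_lt_0_compat; auto).
  exists (mkposreal _ Hdel). intros s Hs0 Hs. simpl in Hs.
  assert (Hclose : forall y, (forall c, (c < d)%nat -> Rabs (y c - x0 c) <= Rabs s * Rabs (h c)) ->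
            Om y /\ edist d y x0 < R0).
  { intros y Hy. assert (E : edist d y x0 <= Rabs s * nrm d h) by (apply edist_bound; auto; apply Rabs_pos).
    assert (E2 : Rabs s * nrm d h < R0).
    { apply Rle_lt_trans with (Rabs s * Nh).
      - apply Rmult_le_compat_l; [apply Rabs_pos|unfold Nh; lra].
      - apply (Rmult_lt_compat_r Nh) in Hs; auto. unfold Rdiv in Hs. rewrite Rmult_assoc, Rinv_l, Rmult_1_r in Hs by lra. lra. }
    split; [apply Hball; unfold R0 in *; pose proof (Rmin_l rho dc); lra| lra]. }
  set (P := fun m : nat => fun c : nat => if (c <? m)%nat then x0 c + s * h c else x0 c).
  assert (HP : forall m c, (c < d)%nat -> Rabs (P m c - x0 c) <= Rabs s * Rabs (h c)).
  { intros m c _. unfold P. destruct (c <? m)%nat.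
    - replace (x0 c + s * h c - x0 c) with (s * h c) by ring. rewrite Rabs_mult; lra.
    - rewrite Rminus_diag, Rabs_R0. apply Rmult_le_pos; apply Rabs_pos. }
  assert (Hterm : forall m, (m < d)%nat ->
     Rabs ((F a (P (S m)) - F a (P m)) - F (incr a m) x0 * h m * s) <= eps' * Rabs s * Rabs (h m)).
  { intros m Hm.
    assert (EPm : upd (P m) m (x0 m) = P m).
    { apply functional_extensionality; intros c. unfold upd, P. destruct (Nat.eqb_spec c m); subst; auto.
      rewrite Nat.ltb_irrefl. reflexivity. }
    assert (EPSm : upd (P m) m (x0 m + s * h m) = P (S m)).
    { apply functional_extensionality; intros c. unfold upd, P. destruct (Nat.eqb_spec c m).
      - subst. destruct (Nat.ltb_spec m (S m)); [reflexivity|lia].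
      - destruct (Nat.ltb_spec c m); destruct (Nat.ltb_spec c (S m)); auto; lia. }
    assert (Hpt : forall tau, Rmin (x0 m) (x0 m + s * h m) <= tau <= Rmax (x0 m) (x0 m + s * h m) ->
               Om (upd (P m) m tau) /\ edist d (upd (P m) m tau) x0 < R0).
    { intros tau Htau. apply Hclose. intros c Hcd. unfold upd. destruct (Nat.eqb_spec c m).
      - subst. rewrite <- Rabs_mult. unfold Rmin, Rmax in Htau.
        pose proof (Rle_abs (s * h m)). pose proof (Rle_abs (- (s * h m))). rewrite Rabs_Ropp in *.
        destruct (Rle_dec (x0 m) (x0 m + s * h m)); apply Rabs_le; split; lra.
      - apply HP; auto. }
    assert (Hder : forall tau, Rmin (x0 m) (x0 m + s * h m) <= tau <= Rmax (x0 m) (x0 m + s * h m) ->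
       derivable_pt_lim (fun t => F a (upd (P m) m t)) tau (F (incr a m) (upd (P m) m tau))).
    { intros tau Htau. destruct (Hpt tau Htau) as [Hom _].
      pose proof (HFd a m (upd (P m) m tau) Hl Ha Hm Hom) as D.
      rewrite upd_same in D. eapply dpl_ext; [|exact D]. intros t. simpl. rewrite upd_upd. reflexivity. }
    destruct (MVT_gen (fun t => F a (upd (P m) m t)) (x0 m) (x0 m + s * h m)
               (fun t => F (incr a m) (upd (P m) m t))) as [xi [Hxi Heq]].
    + intros x Hx. apply is_derive_Reals. apply Hder. lra.
    + intros x Hx. apply derivable_continuous_pt. eexists. apply Hder. auto.
    + simpl in Heq. rewrite EPm, EPSm in Heq. rewrite Heq.
      replace (F (incr a m) (upd (P m) m xi) * (x0 m + s * h m - x0 m) - F (incr a m) x0 * h m * s)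
        with ((F (incr a m) (upd (P m) m xi) - F (incr a m) x0) * (s * h m)) by ring.
      rewrite Rabs_mult, Rabs_mult, <- Rmult_assoc. apply Rmult_le_compat_r; [apply Rabs_pos|].
      apply Rmult_le_compat_r; [apply Rabs_pos|]. left.
      destruct (Hpt xi Hxi) as [Hom Hed]. apply Hc; auto. unfold R0 in Hed. pose proof (Rmin_r rho dc). lra. }
  assert (Eend : F a (fun c => p c + (t0 + s) * h c) = F a (P d)).
  { apply (ContOn_edist0 d Om). apply HFc; auto; lia.
    - apply Hclose. intros c Hcd. unfold P. destruct (Nat.ltb_spec c d); [|lia].
      replace (x0 c + s * h c - x0 c) with (s * h c) by ring. rewrite Rabs_mult; lra.
    - replace (fun c => p c + (t0 + s) * h c) with (fun c => x0 c + s * h c).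
      + apply Hclose. intros c Hcd. replace (x0 c + s * h c - x0 c) with (s * h c) by ring. rewrite Rabs_mult; lra.
      + apply functional_extensionality; intros c. unfold x0. ring.
    - apply Rle_antisym; [|apply edist_nonneg]. unfold edist.
      rewrite (sumN_ext _ _ (fun _ => 0)). rewrite sumN_sumL, sumL_zero, sqrt_0; lra.
      intros c Hcd. unfold P. destruct (Nat.ltb_spec c d); [|lia]. unfold x0. ring. }
  assert (E0 : P 0%nat = x0) by (apply functional_extensionality; intros c; unfold P; reflexivity).
  rewrite Eend. fold x0. replace (F a x0) with (F a (P 0%nat)) by (rewrite E0; reflexivity). rewrite (telescope d (fun m => F a (P m))).
  replace (sumN d (fun m => F a (P (S m)) - F a (P m)) / s - sumN d (fun i => F (incr a i) x0 * h i))
    with (sumN d (fun m => (F a (P (S m)) - F a (P m)) - F (incr a m) x0 * h m * s) / s).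
  2:{ rewrite sumN_minus. rewrite (sumN_ext _ (fun m => F (incr a m) x0 * h m * s) (fun m => s * (F (incr a m) x0 * h m))) by (intros; ring).
      rewrite sumN_scal. field; auto. }
  unfold Rdiv. rewrite Rabs_mult, Rabs_inv.
  assert (Hsp : 0 < Rabs s) by (apply Rabs_pos_lt; auto).
  apply Rle_lt_trans with (sumN d (fun m => eps' * Rabs s * Rabs (h m)) * / Rabs s).
  - apply Rmult_le_compat_r; [left; apply Rinv_0_lt_compat; auto|].
    eapply Rle_trans; [apply sumN_abs|]. apply sumN_le. intros; apply Hterm; auto.
  - 
    rewrite sumN_scal. fold H1. replace (eps' * Rabs s * H1 * / Rabs s) with (eps' * H1) by (field; lra).
    unfold eps'. apply Rmult_lt_reg_r with (H1 + 1); [lra|].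
    replace (eps / (H1 + 1) * H1 * (H1 + 1)) with (eps * H1) by (field; lra). nra.
Qed.
End Chain.


Lemma cs_sq {A} (l : list A) (w u v : A -> R) : (forall x, In x l -> 0 <= w x) ->
  (sumL l (fun x => w x * u x * v x)) ^ 2 <= sumL l (fun x => w x * u x ^ 2) * sumL l (fun x => w x * v x ^ 2).
Proof.
  induction l as [|a l IH]; intros Hw; [unfold sumL; simpl; lra|].
  rewrite !sumL_cons. specialize (IH ltac:(intros; apply Hw; simpl; auto)).
  set (S := sumL l (fun x => w x * u x * v x)) in *.
  set (P := sumL l (fun x => w x * u x ^ 2)) in *. set (Q := sumL l (fun x => w x * v x ^ 2)) in *.
  assert (HP : 0 <= P) by (apply sumL_nonneg; intros; apply Rmult_le_pos; [apply Hw; simpl; auto|apply pow2_ge_0]).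
  assert (HQ : 0 <= Q) by (apply sumL_nonneg; intros; apply Rmult_le_pos; [apply Hw; simpl; auto|apply pow2_ge_0]).
  assert (Hwa : 0 <= w a) by (apply Hw; simpl; auto).
  assert (K : 2 * S * (u a * v a) <= P * v a ^ 2 + Q * u a ^ 2).
  { assert (K1 : (2 * S * (u a * v a)) ^ 2 <= (P * v a ^ 2 + Q * u a ^ 2) ^ 2).
    { assert (0 <= (P * v a ^ 2 - Q * u a ^ 2) ^ 2) by apply pow2_ge_0.
      assert (S ^ 2 * (u a * v a) ^ 2 <= P * Q * (u a * v a) ^ 2) by (apply Rmult_le_compat_r; [apply pow2_ge_0|lra]).
      nra. }
    assert (0 <= P * v a ^ 2 + Q * u a ^ 2) by (pose proof (pow2_ge_0 (v a)); pose proof (pow2_ge_0 (u a)); nra).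
    destruct (Rle_dec (2 * S * (u a * v a)) 0); [lra|].
    apply Rsqr_incr_0_var; unfold Rsqr; [|auto]. simpl in K1. nra. }
  assert (K2 : w a * (2 * S * (u a * v a)) <= w a * (P * v a ^ 2 + Q * u a ^ 2)) by (apply Rmult_le_compat_l; auto).
  nra.
Qed.

Lemma cs_sqrt {A} (l : list A) (w u v : A -> R) : (forall x, In x l -> 0 <= w x) ->
  (forall x, In x l -> 0 <= u x) -> (forall x, In x l -> 0 <= v x) ->
  sumL l (fun x => w x * u x * v x) <= sqrt (sumL l (fun x => w x * u x ^ 2)) * sqrt (sumL l (fun x => w x * v x ^ 2)).
Proof.
  intros Hw Hu Hv. rewrite <- sqrt_mult.
  - rewrite <- (sqrt_pow2 (sumL l (fun x => w x * u x * v x))).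
    + apply sqrt_le_1_alt. apply cs_sq; auto.
    + apply sumL_nonneg; intros; repeat apply Rmult_le_pos; auto.
  - apply sumL_nonneg; intros; apply Rmult_le_pos; auto; apply pow2_ge_0.
  - apply sumL_nonneg; intros; apply Rmult_le_pos; auto; apply pow2_ge_0.
Qed.

Lemma monoAux_sq a i h : (monoAux a i h) ^ 2 = monoAux a i (fun c => h c ^ 2).
Proof. revert i; induction a; intros i; cbn [monoAux]; [ring|]. rewrite <- IHa.
  replace ((h i ^ 2) ^ a) with ((h i ^ a) ^ 2) by (rewrite <- !pow_mult; f_equal; lia). ring. Qed.

Lemma rpow_pos x p : 0 < x -> rpow x p = Rpower x p.
Proof. intros H. unfold rpow. destruct (Req_EM_T x 0); [lra|auto]. Qed.
Lemma rpow_zero p : p <> 0 -> rpow 0 p = 0.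
Proof. intros H. unfold rpow. destruct (Req_EM_T 0 0); [|lra]. destruct (Req_EM_T p 0); [lra|auto]. Qed.
Lemma rpow_nonneg x p : 0 <= rpow x p.
Proof. unfold rpow. destruct (Req_EM_T x 0); [destruct (Req_EM_T p 0); lra|]. unfold Rpower; left; apply exp_pos. Qed.

Lemma rpow_mult t e p : 0 <= t -> 0 <= e -> p <> 0 -> rpow (t * e) p = pw t p * rpow e p.
Proof.
  intros Ht He Hp. destruct (Req_dec t 0) as [->|Ht0].
  - rewrite Rmult_0_l, rpow_zero, pw_0 by auto. ring.
  - destruct (Req_dec e 0) as [->|He0].
    + rewrite Rmult_0_r, rpow_zero by auto. ring.
    + rewrite rpow_pos, rpow_pos, pw_pos by (try apply Rmult_lt_0_compat; lra).
      rewrite Rpower_mult_distr; auto; lra.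
Qed.

Section Taylor.
Variables (d : nat) (Om : Pt -> Prop) (r : nat) (f : Pt -> R) (F : MI -> Pt -> R) (M : MI -> R) (gam : R).
Variables (z x : Pt).
Hypothesis HF : DerivFamily d Om r f F.
Hypothesis HOm : IsOpen d Om.
Hypothesis Hgam : 0 < gam <= 1.
Hypothesis HM0 : forall a, In a (mi d r) -> 0 <= M a.
Hypothesis HHol : forall a, In a (mi d r) -> forall y y', Om y -> Om y' ->
   Rabs (F a y - F a y') <= M a * rpow (edist d y y') gam.
Hypothesis Hseg : forall t, 0 <= t <= 1 -> Om (fun m => z m + t * (x m - z m)).

Definition Tay (x : Pt) : R :=
  sumL (mi_lt d (S r)) (fun b => F b z / INR (mi_fact b) * mono b (fun c => x c - z c)).

Lemma taylor_bound :
  Rabs (f x - Tay x) <= semi d r gam M * edist d x z ^ r * rpow (edist d x z) gam.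
Proof.
  set (h := fun c => x c - z c).
  set (pt := fun t => fun c => z c + t * h c).
  set (Phi := fun m t => sumL (mi d m) (fun a => INR (fact m) / INR (mi_fact a) * F a (pt t) * mono a h)).
  set (e := edist d x z).
  set (SS := sumL (mi d r) (fun a => INR (fact r) / INR (mi_fact a) * M a ^ 2)).
  assert (Hw : forall m a, 0 <= INR (fact m) / INR (mi_fact a)).
  { intros. apply Rmult_le_pos; [apply pos_INR|]. left; apply Rinv_0_lt_compat.
    pose proof (mi_fact_neq0 a). pose proof (pos_INR (mi_fact a)). lra. }
  assert (Hpt0 : pt 0 = z) by (apply functional_extensionality; intros c; unfold pt; ring).
  assert (Hpt1 : pt 1 = x) by (apply functional_extensionality; intros c; unfold pt, h; ring).
  assert (He : e = nrm d h) by reflexivity.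
  assert (Hedist : forall t, 0 <= t -> edist d (pt t) (pt 0) = t * e).
  { intros t Ht. unfold edist at 1. rewrite He. unfold nrm.
    rewrite (sumN_ext _ _ (fun c => t ^ 2 * h c ^ 2)) by (intros; unfold pt; ring).
    rewrite sumN_scal, sqrt_mult, sqrt_pow2; auto. apply pow2_ge_0.
    apply sumN_nonneg; intros; apply pow2_ge_0. }
  assert (HD : forall m, (m < r)%nat -> forall t, 0 <= t <= 1 -> derivable_pt_lim
      (fun t => sumL (mi d m) (fun a => INR (fact m) / INR (mi_fact a) * mono a h * F a (pt t))) t (Phi (S m) t)).
  { intros m Hm t Ht.
    eapply dpl_eq.
    2:{ apply (dpl_sumL (mi d m) (fun a t => INR (fact m) / INR (mi_fact a) * mono a h * F a (pt t))
           (fun a t => INR (fact m) / INR (mi_fact a) * mono a h * sumN d (fun i => F (incr a i) (pt t) * h i))).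
        intros a Ha. apply In_mi in Ha. destruct Ha as [Hl Hs].
        apply dpl_scal. apply (chain d Om r f F HF HOm a z h t Hl ltac:(lia)). apply Hseg; auto. }
    unfold Phi. rewrite (sumL_ext_in (mi d (S m)) _ (fun b => INR (fact (S m)) / INR (mi_fact b) * (F b (pt t) * mono b h))) by (intros; ring).
    rewrite <- (multi_step d m (fun b => F b (pt t) * mono b h)).
    apply sumL_ext_in. intros a Ha. apply In_mi in Ha. destruct Ha as [Hl _].
    rewrite <- sumN_scal, <- sumN_scal. apply sumN_ext. intros i Hi. rewrite mono_incr by lia. ring.
    }
  assert (HD' : forall m, (m < r)%nat -> forall t, 0 <= t <= 1 -> derivable_pt_lim (Phi m) t (Phi (S m) t)).
  { intros m Hm t Ht. apply (dpl_ext (fun t => sumL (mi d m) (fun a => INR (fact m) / INR (mi_fact a) * mono a h * F a (pt t)))).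
    - intros s. unfold Phi. apply sumL_ext_in. intros; ring.
    - apply HD; auto. }
  clear HD.
  set (Cst := sqrt SS * e ^ r * rpow e gam).
  assert (HH : forall t, 0 <= t <= 1 -> Rabs (Phi r t - Phi r 0) <= Cst * pw t gam).
  { intros t Ht. unfold Phi. rewrite <- sumL_minus.
    eapply Rle_trans; [apply sumL_abs|].
    apply Rle_trans with (sumL (mi d r) (fun a => INR (fact r) / INR (mi_fact a) * M a * Rabs (mono a h)) * (pw t gam * rpow e gam)).
    - rewrite Rmult_comm, <- sumL_scal. apply sumL_le. intros a Ha.
      replace (INR (fact r) / INR (mi_fact a) * F a (pt t) * mono a h - INR (fact r) / INR (mi_fact a) * F a (pt 0) * mono a h)
        with ((INR (fact r) / INR (mi_fact a)) * ((F a (pt t) - F a (pt 0)) * mono a h)) by ring.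
      rewrite Rabs_mult, Rabs_mult, (Rabs_pos_eq (INR (fact r) / INR (mi_fact a))) by auto.
      pose proof (HHol a Ha (pt t) (pt 0) (Hseg t Ht) (Hseg 0 ltac:(lra))) as Hb.
      rewrite Hedist, rpow_mult in Hb; try lra. 2:{ unfold e; apply edist_nonneg. }
      pose proof (Hw r a). pose proof (Rabs_pos (mono a h)). pose proof (HM0 a Ha).
      pose proof (Rabs_pos (F a (pt t) - F a (pt 0))).
      assert (Rabs (F a (pt t) - F a (pt 0)) * Rabs (mono a h) <= M a * (pw t gam * rpow e gam) * Rabs (mono a h))
        by (apply Rmult_le_compat_r; auto).
      apply Rle_trans with (INR (fact r) / INR (mi_fact a) * (M a * (pw t gam * rpow e gam) * Rabs (mono a h))).
      + apply Rmult_le_compat_l; auto.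
      + right; ring.
    - assert (CS : sumL (mi d r) (fun a => INR (fact r) / INR (mi_fact a) * M a * Rabs (mono a h)) <= sqrt SS * e ^ r).
      { eapply Rle_trans; [apply (cs_sqrt (mi d r) (fun a => INR (fact r) / INR (mi_fact a)) M (fun a => Rabs (mono a h)))|].
        - intros; auto. - auto. - intros; apply Rabs_pos.
        - apply Rmult_le_compat_l; [apply sqrt_pos|]. right.
          rewrite (sumL_ext_in _ _ (fun a => INR (fact r) / INR (mi_fact a) * mono a (fun c => h c ^ 2))).
          2:{ intros a _. rewrite <- Rsqr_pow2, <- Rsqr_abs, Rsqr_pow2. unfold mono. rewrite monoAux_sq. reflexivity. }
          rewrite multinomial. rewrite He. unfold nrm.
          set (Q := sumN d (fun c => h c ^ 2)).
          assert (HQ : 0 <= Q) by (apply sumN_nonneg; intros; apply pow2_ge_0).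
          rewrite <- (sqrt_sqrt Q HQ) at 1. rewrite Rpow_mult_distr.
          replace (sqrt Q ^ r * sqrt Q ^ r) with ((sqrt Q ^ r) ^ 2) by ring.
          apply sqrt_pow2. apply pow_le, sqrt_pos. }
      pose proof (pw_nonneg t gam). pose proof (rpow_nonneg e gam).
      unfold Cst. apply Rle_trans with (sqrt SS * e ^ r * (pw t gam * rpow e gam)).
      + apply Rmult_le_compat_r; auto. apply Rmult_le_pos; auto.
      + right; ring. }
  assert (HCst : 0 <= Cst).
  { unfold Cst. apply Rmult_le_pos; [apply Rmult_le_pos; [apply sqrt_pos|apply pow_le; apply edist_nonneg]|apply rpow_nonneg]. }
  pose proof (iter_bound Phi r Cst gam HCst Hgam HD' HH) as IB.
  assert (E0 : Phi 0%nat 1 = f x).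
  { unfold Phi. rewrite mi_zero, sumL_cons, sumL_nil, Hpt1. unfold mono. rewrite monoAux_zero, mi_fact_repeat.
    destruct HF as [HF0 _]. rewrite HF0. simpl. field. rewrite <- Hpt1. apply Hseg; lra. }
  assert (E1 : sumN (S r) (fun l => Phi l 0 / INR (fact l)) = Tay x).
  { unfold Tay, mi_lt. rewrite sumL_flat_map. apply sumL_ext_in. intros l _. unfold Phi. rewrite Hpt0.
    unfold Rdiv at 1. rewrite Rmult_comm, <- sumL_scal. apply sumL_ext_in. intros a _. fold h. field.
    split; [apply mi_fact_neq0|apply INR_fact_neq_0]. }
  rewrite E0, E1 in IB. eapply Rle_trans; [exact IB|]. right.
  unfold Cst, semi. fold SS. fold e. unfold prodg. field.
  pose proof (prodg_pos r gam ltac:(lra)). unfold prodg in H. lra.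
Qed.
End Taylor.


Lemma exact_taylor d N X k c z q w r (F : MI -> Pt -> R) :
  Exact d N X k c z q w -> (k <= r)%nat -> (S r <= q)%nat ->
  Dop d k c F z = sumN N (fun j => w j * Tay d r F z (X j)).
Proof.
  intros Hex Hkr Hrq.
  destruct (Rep_poly d q (Tay d r F z)) as [cf Hcf].
  { unfold Tay. apply (Rep_lin d q z (mi_lt d (S r)) (fun b => F b z / INR (mi_fact b))).
    intros b Hb. apply In_mi_lt in Hb. lia. }
  set (Gfam := fun a x => sumL (mi_lt d (S r)) (fun b => F b z / INR (mi_fact b) * dAux z b a 0 x)).
  assert (HG : DerivFamily d (fun _ => True) k (poly d q cf) Gfam).
  { split; [|split].
    - intros x _. rewrite Hcf. unfold Gfam, Tay. apply sumL_ext_in. intros b Hb.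
      apply In_mi_lt in Hb. destruct Hb as [Hl _]. rewrite <- Hl, dAux_repeat0. reflexivity.
    - intros a Hl Ha. unfold Gfam. apply ContOn_sumL. intros b Hb. apply In_mi_lt in Hb.
      apply (ContOn_mult d _ (fun _ => F b z / INR (mi_fact b))). apply ContOn_const.
      apply dAux_cont. lia.
    - intros a i x Hl Ha Hi _. unfold Gfam.
      apply (dpl_sumL (mi_lt d (S r)) (fun b t => F b z / INR (mi_fact b) * dAux z b a 0 (upd x i t))
              (fun b _ => F b z / INR (mi_fact b) * dAux z b (incr a i) 0 x)).
      intros b Hb. apply In_mi_lt in Hb. apply dpl_scal.
      pose proof (dAux_deriv z b a 0 i x ltac:(lia) ltac:(lia)) as D. exact D. }
  pose proof (Hex cf Gfam HG) as E.
  rewrite (sumN_ext _ _ (fun j => w j * Tay d r F z (X j))) in E by (intros; rewrite Hcf; reflexivity).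
  rewrite <- E. unfold Dop. apply sumL_ext_in. intros a Ha. f_equal.
  apply In_mi_lt in Ha. destruct Ha as [Hl Ha]. unfold Gfam.
  rewrite (sumL_ext_in _ _ (fun b => if MIeq b a then F b z / INR (mi_fact b) * INR (mi_fact b) else 0)).
  - rewrite sumL_delta. field. apply mi_fact_neq0. apply NoDup_mi_lt. apply In_mi_lt. lia.
  - intros b Hb. apply In_mi_lt in Hb. rewrite dAux_at_z by lia.
    destruct (MIeq b a); subst; ring.
Qed.


Theorem mainTheorem11
  (d N k q : nat) (c : MI -> R) (z : Pt) (X : nat -> Pt) (mu : R) (w : nat -> R)
  (Hord : sumL (mi d k) (fun a => Rabs (c a)) <> 0)
  (Hdist : forall i j, (i < N)%nat -> (j < N)%nat -> i <> j -> ~ pt_eq d (X i) (X j))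
  (Hmu : 0 <= mu) (Hqk : (k < q)%nat)
  (Hmin : IsMinimal d N X k c z q mu w)
  (Hnz : exists j, (j < N)%nat /\ w j <> 0 /\ ~ pt_eq d (X j) z)
  (Om : Pt -> Prop) (HOm : IsDomain d Om)
  (Hseg : forall j t, (j < N)%nat -> 0 <= t <= 1 ->
            Om (fun m => z m + t * (X j m - z m)))
  (rho : R)
  (Hrho : IsInf (fun v => exists w', Exact d N X k c z q w' /\ v = norm1mu d N X z mu w') rho)
  (h : R)
  (Hh : IsMax (fun t => exists j, (j < N)%nat /\ w j <> 0 /\ t = edist d (X j) z) h)
  (s : R)
  (Hs : IsMin (fun t => exists j, (j < N)%nat /\ w j <> 0 /\ ~ pt_eq d (X j) z /\
                               t = edist d (X j) z) s) :
  forall (r : nat) (gam : R) (f : Pt -> R) (F : MI -> Pt -> R) (M : MI -> R),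
    (k <= r)%nat -> (r <= q - 1)%nat -> 0 < gam <= 1 ->
    DerivFamily d Om r f F ->
    (forall a, In a (mi d r) -> is_lub (HolderSet d Om gam (F a)) (M a)) ->
    let err := Rabs (Dop d k c F z - sumN N (fun j => w j * f (X j))) in
    (mu <= INR r + gam -> err <= rho * Rpower h (INR r + gam - mu) * semi d r gam M) /\
    (INR r + gam < mu -> err <= rho * Rpower s (INR r + gam - mu) * semi d r gam M) /\
    (mu = INR r + gam -> err <= rho * semi d r gam M).
Proof.
  intros r gam f F M Hkr Hrq Hgam HDF HHM err.
  destruct Hnz as [j0 [Hj0 [Hwj0 Hxj0]]].
  destruct Hmin as [Hexw Hminw].
  assert (Hrho_eq : rho = norm1mu d N X z mu w).
  { destruct Hrho as [Hlb Hglb]. apply Rle_antisym.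
    - apply Hlb. exists w; split; auto.
    - apply Hglb. intros v [w' [Hw' ->]]. apply Hminw; auto. }
  assert (Hcont : forall a, In a (mi d r) -> ContOn d Om (F a)).
  { intros a Ha. apply In_mi in Ha. destruct HDF as [_ [Hc _]]. apply Hc; lia. }
  assert (HM0 : forall a, In a (mi d r) -> 0 <= M a).
  { intros a Ha. destruct (HHM a Ha) as [Hub Hleast]. destruct (Rle_dec 0 (M a)) as [|Hn]; auto.
    exfalso. assert (M a <= M a - 1); [|lra]. apply Hleast. intros v Hv. exfalso.
    pose proof (Hub v Hv). destruct Hv as [y [y' [Hy [Hy' [Hne ->]]]]].
    assert (0 <= Rabs (F a y - F a y') / rpow (edist d y y') gam).
    { apply Rmult_le_pos; [apply Rabs_pos|]. unfold rpow. destruct (Req_EM_T (edist d y y') 0).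
      - destruct (Req_EM_T gam 0); [rewrite Rinv_1; lra|]. rewrite Rinv_0; lra.
      - left. apply Rinv_0_lt_compat. unfold Rpower. apply exp_pos. }
    lra. }
  assert (HHol : forall a, In a (mi d r) -> forall y y', Om y -> Om y' ->
     Rabs (F a y - F a y') <= M a * rpow (edist d y y') gam).
  { intros a Ha y y' Hy Hy'.
    destruct (Req_dec (edist d y y') 0) as [E|E].
    - rewrite (ContOn_edist0 d Om (F a) y' y (Hcont a Ha) Hy' Hy E), Rminus_diag, Rabs_R0.
      apply Rmult_le_pos; [apply HM0; auto|apply rpow_nonneg].
    - assert (Hp : 0 < edist d y y') by (pose proof (edist_nonneg d y y'); lra).
      assert (Hne : ~ pt_eq d y y') by (intros P; apply E, pt_eq_edist_zero, P).
      destruct (HHM a Ha) as [Hub _].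
      pose proof (Hub _ (ex_intro _ y (ex_intro _ y' (conj Hy (conj Hy' (conj Hne eq_refl)))))) as Hb.
      rewrite rpow_pos in * by auto.
      assert (HR : 0 < Rpower (edist d y y') gam) by (unfold Rpower; apply exp_pos).
      apply (Rmult_le_compat_r (Rpower (edist d y y') gam)) in Hb; [|lra].
      unfold Rdiv in Hb. rewrite Rmult_assoc, Rinv_l, Rmult_1_r in Hb by lra. exact Hb. }
  assert (HT : forall j, (j < N)%nat ->
     Rabs (f (X j) - Tay d r F z (X j)) <= semi d r gam M * edist d (X j) z ^ r * rpow (edist d (X j) z) gam).
  { intros j Hj. apply (taylor_bound d Om r f F M gam z (X j) HDF (proj1 HOm) Hgam HM0 HHol).
    intros t Ht. apply Hseg; auto. }
  pose proof (exact_taylor d N X k c z q w r F Hexw Hkr ltac:(lia)) as HE.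
  assert (Hsemi : 0 <= semi d r gam M).
  { unfold semi. apply Rmult_le_pos; [|apply sqrt_pos]. left. apply Rinv_0_lt_compat.
    apply (prodg_pos r gam). lra. }
  set (B := fun j => Rabs (w j) * (semi d r gam M * edist d (X j) z ^ r * rpow (edist d (X j) z) gam)).
  assert (Herr : err <= sumN N B).
  { unfold err. rewrite HE, <- sumN_minus.
    eapply Rle_trans; [apply sumN_abs|]. apply sumN_le. intros j Hj. unfold B.
    replace (w j * Tay d r F z (X j) - w j * f (X j)) with (- (w j * (f (X j) - Tay d r F z (X j)))) by ring.
    rewrite Rabs_Ropp, Rabs_mult. apply Rmult_le_compat_l; [apply Rabs_pos|]. apply HT; auto. }
  assert (Hcmp : forall P, 0 <= P ->
     (forall j, (j < N)%nat -> w j <> 0 -> 0 < edist d (X j) z ->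
        Rpower (edist d (X j) z) (INR r + gam - mu) <= P) ->
     err <= rho * P * semi d r gam M).
  { intros P HP Hj. eapply Rle_trans; [exact Herr|]. rewrite Hrho_eq. unfold norm1mu.
    rewrite Rmult_assoc, Rmult_comm, <- sumN_scal. apply sumN_le. intros j Hjn. unfold B.
    destruct (Req_dec (w j) 0) as [Hw0|Hw0].
    { rewrite Hw0, Rabs_R0. right; ring. }
    set (e := edist d (X j) z).
    destruct (Req_dec e 0) as [He0|He0].
    { rewrite He0, rpow_zero by lra. rewrite Rmult_0_r, Rmult_0_r.
      apply Rmult_le_pos; [apply Rmult_le_pos; auto|]. apply Rmult_le_pos; [apply Rabs_pos|apply rpow_nonneg]. }
    assert (Hep : 0 < e) by (pose proof (edist_nonneg d (X j) z); unfold e in *; lra).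
    rewrite !rpow_pos by auto. rewrite <- Rpower_pow by auto.
    replace (semi d r gam M * Rpower e (INR r) * Rpower e gam) with (semi d r gam M * (Rpower e mu * Rpower e (INR r + gam - mu))).
    2:{ rewrite (Rmult_assoc (semi d r gam M)), <- !Rpower_plus. f_equal. f_equal. ring. }
    pose proof (Hj j Hjn Hw0 Hep). fold e in H.
    assert (0 < Rpower e mu) by (unfold Rpower; apply exp_pos).
    pose proof (Rabs_pos (w j)).
    apply Rle_trans with (Rabs (w j) * (semi d r gam M * (Rpower e mu * P))).
    - apply Rmult_le_compat_l; auto. apply Rmult_le_compat_l; auto. apply Rmult_le_compat_l; lra.
    - right; ring. }
  destruct Hh as [[jh [Hjh [Hwjh ->]]] Hhmax].
  assert (Hej0 : 0 < edist d (X j0) z).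
  { pose proof (edist_nonneg d (X j0) z). destruct (Req_dec (edist d (X j0) z) 0) as [E|E]; [|lra].
    exfalso. apply Hxj0. apply edist_zero_pt_eq; auto. }
  assert (Hhpos : 0 < edist d (X jh) z).
  { pose proof (Hhmax (edist d (X j0) z) (ex_intro _ j0 (conj Hj0 (conj Hwj0 eq_refl)))). lra. }
  assert (Case1 : mu <= INR r + gam -> err <= rho * Rpower (edist d (X jh) z) (INR r + gam - mu) * semi d r gam M).
  { intros Hmu0. apply Hcmp. unfold Rpower; left; apply exp_pos.
    intros j Hj Hw Hep. apply Rle_Rpower_l; [lra|]. split; auto.
    apply Hhmax. exists j. auto. }
  split; [exact Case1|split].
  - intros Hmu0. apply Hcmp. unfold Rpower; left; apply exp_pos.
    intros j Hj Hw Hep. destruct Hs as [[js [Hjs [Hwjs [Hxjs ->]]]] Hsmin].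
    assert (Hspos : 0 < edist d (X js) z).
    { pose proof (edist_nonneg d (X js) z). destruct (Req_dec (edist d (X js) z) 0) as [E|E]; [|lra].
      exfalso. apply Hxjs. apply edist_zero_pt_eq; auto. }
    assert (Hle : edist d (X js) z <= edist d (X j) z).
    { apply Hsmin. exists j. repeat split; auto. intros P. pose proof (pt_eq_edist_zero _ _ _ P). lra. }
    replace (INR r + gam - mu) with (- (mu - INR r - gam)) by ring. rewrite !Rpower_Ropp.
    apply Rinv_le_contravar. unfold Rpower; apply exp_pos. apply Rle_Rpower_l; lra.
  - intros Hmu0. pose proof (Case1 ltac:(lra)) as H1. rewrite Hmu0 in H1.
    replace (INR r + gam - (INR r + gam)) with 0 in H1 by ring. rewrite Rpower_O in H1 by auto. lra.
Qed.
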